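(* Let $\xi>0$ be such that $D_{\xi}:=D^TD-\xi^2 I$ is nonsingular. Then for every $\omega\geq 0$, the matrix $G(j\omega)$ has a singular value equal to $\xi$ if and only if $\lambda=j\omega$ is an eigenvalue of the linear operator $\mathcal{L}_{\xi}$, i.e. there exists $u\in\mathcal{D}(\mathcal{L}_{\xi})$, $u\neq 0$, with $\mathcal{L}_{\xi}u=j\omega\, u$.
   Context: Let $n,m,n_u,n_y$ be positive integers, $A_0,\dots,A_m\in\mathbb{R}^{n\times n}$, $B\in\mathbb{R}^{n\times n_u}$, $C\in\mathbb{R}^{n_y\times n}$, $D\in\mathbb{R}^{n_y\times n_u}$, and delays $\tau_1,\dots,\tau_m\geq 0$ with $\tau_{\max}=\max_i\tau_i$. The transfer function is $G(s)=C\left(sI-A_0-\sum_{i=1}^m A_i e^{-\tau_i s}\right)^{-1}B+D$. Standing assumption: the system is stable, i.e. all solutions $s$ of $\det\left(sI-A_0-\sum_{i=1}^m A_i e^{-\tau_i s}\right)=0$ have negative real part. For $\xi>0$ put $D_\xi=D^TD-\xi^2I_{n_u}$ and $\tilde D_\xi=DD^T-\xi^2 I_{n_y}$ (for $\xi>0$ one is nonsingular iff the other is). Define the $2n\times 2n$ matrices $M_0=\begin{bmatrix} A_0-BD_\xi^{-1}D^TC & -BD_\xi^{-1}B^T\\ \xi^2 C^T\tilde D_\xi^{-1}C & -A_0^T+C^TDD_\xi^{-1}B^T\end{bmatrix}$, $M_i=\begin{bmatrix}A_i&0\\0&0\end{bmatrix}$, $M_{-i}=\begin{bmatrix}0&0\\0&-A_i^T\end{bmatrix}$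 for $1\le i\le m$. Let $X=\mathcal{C}([-\tau_{\max},\tau_{\max}],\mathbb{C}^{2n})$ (continuous functions). The operator $\mathcal{L}_\xi$ on $X$ has domain $\mathcal{D}(\mathcal{L}_\xi)=\{\phi\in X:\ \phi'\in X,\ \phi'(0)=M_0\phi(0)+\sum_{i=1}^m(M_i\phi(-\tau_i)+M_{-i}\phi(\tau_i))\}$ and acts by $\mathcal{L}_\xi\phi=\phi'$. *)

(* Defs.v *)
From HB Require Import structures.
From mathcomp Require Import all_boot all_order all_algebra.
From mathcomp Require Import all_classical all_reals all_analysis.
From mathcomp Require Import complex.
Set Implicit Arguments. Unset Strict Implicit. Unset Printing Implicit Defensive.
Import Order.TTheory GRing.Theory Num.Theory.
Import numFieldNormedType.Exports.
Local Open Scope ring_scope.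
Local Open Scope classical_set_scope.

Section Defs.
Variable R : realType.

Definition toC (x : R) : R[i] := Complex x 0.
Definition mxC (p q : nat) (M : 'M[R]_(p, q)) : 'M[R[i]]_(p, q) := map_mx toC M.

Definition cexp (z : R[i]) : R[i] :=
  Complex (expR (complex.Re z) * cos (complex.Im z)) (expR (complex.Re z) * sin (complex.Im z)).

Definition ctrmx (p q : nat) (M : 'M[R[i]]_(p, q)) : 'M[R[i]]_(q, p) :=
  (map_mx (@conjc R) M)^T.

Definition charmx (n m : nat) (A0 : 'M[R]_n) (A : 'I_m -> 'M[R]_n)
  (tau : 'I_m -> R) (s : R[i]) : 'M[R[i]]_n :=
  s%:M - mxC A0 - \sum_(i < m) cexp (- (toC (tau i)) * s) *: mxC (A i).

Definition transfer (n m nu ny : nat) (A0 : 'M[R]_n) (A : 'I_m -> 'M[R]_n)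
  (tau : 'I_m -> R) (B : 'M[R]_(n, nu)) (C : 'M[R]_(ny, n)) (D : 'M[R]_(ny, nu))
  (s : R[i]) : 'M[R[i]]_(ny, nu) :=
  mxC C *m invmx (charmx A0 A tau s) *m mxC B + mxC D.

Definition has_singular_value (p q : nat) (M : 'M[R[i]]_(p, q)) (sigma : R) :=
  0 <= sigma /\ eigenvalue (ctrmx M *m M) (toC (sigma ^+ 2)).

Definition tau_max (m : nat) (tau : 'I_m -> R) : R := \big[Num.max/0]_(i < m) tau i.

Definition cvRe (k : nat) (v : 'cV[R[i]]_k) : 'cV[R]_k := map_mx (@complex.Re R) v.
Definition cvIm (k : nat) (v : 'cV[R[i]]_k) : 'cV[R]_k := map_mx (@complex.Im R) v.

Definition cont_on (k : nat) (a b : R) (u : R -> 'cV[R[i]]_k) :=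
  {within `[a, b], continuous (fun t => cvRe (u t))} /\
  {within `[a, b], continuous (fun t => cvIm (u t))}.

Definition deriv_on (k : nat) (a b : R) (u u' : R -> 'cV[R[i]]_k) :=
  forall t, a <= t <= b ->
    ((fun h : R => h^-1 *: (cvRe (u (t + h)) - cvRe (u t)))
       @ within [set h | a <= t + h <= b] 0^' --> cvRe (u' t)) /\
    ((fun h : R => h^-1 *: (cvIm (u (t + h)) - cvIm (u t)))
       @ within [set h | a <= t + h <= b] 0^' --> cvIm (u' t)).

Definition Dxi (nu ny : nat) (D : 'M[R]_(ny, nu)) (xi : R) : 'M[R]_nu :=
  D^T *m D - (xi ^+ 2)%:M.
Definition tDxi (nu ny : nat) (D : 'M[R]_(ny, nu)) (xi : R) : 'M[R]_ny :=
  D *m D^T - (xi ^+ 2)%:M.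

Definition Mzero (n nu ny : nat) (A0 : 'M[R]_n) (B : 'M[R]_(n, nu))
  (C : 'M[R]_(ny, n)) (D : 'M[R]_(ny, nu)) (xi : R) : 'M[R]_(n + n) :=
  block_mx (A0 - B *m invmx (Dxi D xi) *m D^T *m C)
           (- (B *m invmx (Dxi D xi) *m B^T))
           (xi ^+ 2 *: (C^T *m invmx (tDxi D xi) *m C))
           (- A0^T + C^T *m D *m invmx (Dxi D xi) *m B^T).
Definition Mplus (n : nat) (Ai : 'M[R]_n) : 'M[R]_(n + n) :=
  block_mx Ai 0 0 0.
Definition Mminus (n : nat) (Ai : 'M[R]_n) : 'M[R]_(n + n) :=
  block_mx 0 0 0 (- Ai^T).

Definition in_dom_L (n m nu ny : nat) (A0 : 'M[R]_n) (A : 'I_m -> 'M[R]_n)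
  (tau : 'I_m -> R) (B : 'M[R]_(n, nu)) (C : 'M[R]_(ny, n)) (D : 'M[R]_(ny, nu))
  (xi : R) (phi phi' : R -> 'cV[R[i]]_(n + n)) :=
  let T := tau_max tau in
  [/\ cont_on (- T) T phi, deriv_on (- T) T phi phi', cont_on (- T) T phi' &
      phi' 0 = mxC (Mzero A0 B C D xi) *m phi 0 +
        \sum_(i < m) (mxC (Mplus (A i)) *m phi (- tau i) +
                      mxC (Mminus (A i)) *m phi (tau i))].

Definition eigenvalue_L (n m nu ny : nat) (A0 : 'M[R]_n) (A : 'I_m -> 'M[R]_n)
  (tau : 'I_m -> R) (B : 'M[R]_(n, nu)) (C : 'M[R]_(ny, n)) (D : 'M[R]_(ny, nu))
  (xi : R) (lambda : R[i]) :=
  let T := tau_max tau in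
  exists u u' : R -> 'cV[R[i]]_(n + n),
    [/\ in_dom_L A0 A tau B C D xi u u',
        (exists t, - T <= t <= T /\ u t != 0) &
        forall t, - T <= t <= T -> u' t = lambda *: u t].

End Defs.

(* Main.v *)
Require Import Defs.
From HB Require Import structures.
From mathcomp Require Import all_boot all_order all_algebra.
From mathcomp Require Import all_classical all_reals all_analysis.
From mathcomp Require Import complex.
From mathcomp Require Import ring lra.
Import Order.TTheory GRing.Theory Num.Theory.
Import numFieldNormedType.Exports.
Local Open Scope ring_scope.
Local Open Scope classical_set_scope.

Section Sc.
Variable R : realType.
Variable w : R.

Lemma is_derive_lin (t : R) : is_derive t 1 (fun x : R => w * x) w.
Proof.
have H := @is_deriveZ R R R id w t 1 1 (is_derive_id _ _).
have -> : (fun x : R => w * x) = w \*: id by apply/funext.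
by apply: is_derive_eq H _; rewrite /= scaler1.
Qed.

Lemma is_derive_cosw (t : R) : is_derive t 1 (fun x => cos (w * x)) (- (w * sin (w * t))).
Proof.
have := @is_derive1_comp R cos (fun x => w * x) t _ _ (is_derive_cos _) (is_derive_lin t). rewrite /comp.
move=> H; apply: is_derive_eq H _; by rewrite mulNr mulrC.
Qed.

Lemma is_derive_sinw (t : R) : is_derive t 1 (fun x => sin (w * x)) (w * cos (w * t)).
Proof.
have := @is_derive1_comp R sin (fun x => w * x) t _ _ (is_derive_sin _) (is_derive_lin t).
by move=> H; apply: is_derive_eq H _; rewrite mulrC.
Qed.
End Sc.
Section Sc2.
Variable R : realType.
Variable w : R.
Implicit Types A : set R.

Lemma wcontM {A : set R} {f g : R -> R} : {within A, continuous f} -> {within A, continuous g} ->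
  {within A, continuous (f \* g)}.
Proof. by move=> cf cg x; apply: (@continuousM _ (subspace A) f g x); [exact: cf|exact: cg]. Qed.

Lemma wcontD {A : set R} {f g : R -> R} : {within A, continuous f} -> {within A, continuous g} ->
  {within A, continuous (f + g)}.
Proof. by move=> cf cg x; apply: (@continuousD _ _ (subspace A) f g x); [exact: cf|exact: cg]. Qed.

Lemma wcontB {A : set R} {f g : R -> R} : {within A, continuous f} -> {within A, continuous g} ->
  {within A, continuous (f - g)}.
Proof. by move=> cf cg x; apply: (@continuousB _ _ (subspace A) f g x); [exact: cf|exact: cg]. Qed.

Lemma cont_cosw : continuous (fun x : R => cos (w * x)).
Proof.
move=> x; apply/differentiable_continuous/derivable1_diffP.
by case: (@is_derive_cosw R w x : is_derive _ _ _ _).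
Qed.

Lemma cont_sinw : continuous (fun x : R => sin (w * x)).
Proof.
move=> x; apply/differentiable_continuous/derivable1_diffP.
by case: (@is_derive_sinw R w x : is_derive _ _ _ _).
Qed.

Lemma const_deriv0 (f : R -> R) (T : R) :
  {within `[-T, T], continuous f} ->
  (forall x, -T < x < T -> is_derive x 1 f 0) ->
  forall t, -T <= t <= T -> f t = f 0.
Proof.
move=> cf df t /andP[Tt tT].
have T0 : 0 <= T by lra.
case: (leP 0 t) => t0.
- have [] := @MVT_segment R f (fun _ => 0) 0 t t0.
  + move=> x; rewrite in_itv /= => /andP[h1 h2]; apply: df; apply/andP; split; lra.
  + apply: continuous_subspaceW cf => x /=; rewrite !in_itv /= => /andP[h1 h2].
    apply/andP; split; lra.
  + by move=> c _; rewrite mul0r => /eqP; rewrite subr_eq0 => /eqP.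
- have [] := @MVT_segment R f (fun _ => 0) t 0 (ltW t0).
  + move=> x; rewrite in_itv /= => /andP[h1 h2]; apply: df; apply/andP; split; lra.
  + apply: continuous_subspaceW cf => x /=; rewrite !in_itv /= => /andP[h1 h2].
    apply/andP; split; lra.
  + by move=> c _; rewrite mul0r => /eqP; rewrite subr_eq0 => /eqP.
Qed.

Lemma ode_unique (a b : R -> R) (T : R) :
  {within `[-T, T], continuous a} -> {within `[-T, T], continuous b} ->
  (forall t, -T < t < T -> is_derive t 1 a (- (w * b t)) /\ is_derive t 1 b (w * a t)) ->
  forall t, -T <= t <= T ->
    a t = cos (w * t) * a 0 - sin (w * t) * b 0 /\
    b t = sin (w * t) * a 0 + cos (w * t) * b 0.
Proof.
move=> ca cb dab t tT.
pose c := fun x : R => cos (w * x).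
pose s := fun x : R => sin (w * x).
pose p := c \* a + s \* b.
pose q := c \* b - s \* a.
have cc : {within `[-T, T], continuous c} by apply: continuous_subspaceT; exact: cont_cosw.
have cs : {within `[-T, T], continuous s} by apply: continuous_subspaceT; exact: cont_sinw.
have dp : forall x, -T < x < T -> is_derive x 1 p 0.
  move=> x hx; have [da db] := dab x hx.
  have H := is_deriveD (is_deriveM (@is_derive_cosw R w x) da) (is_deriveM (@is_derive_sinw R w x) db).
  apply: is_derive_eq H _; rewrite /c /s /GRing.scale /=; ring.
have dq : forall x, -T < x < T -> is_derive x 1 q 0.
  move=> x hx; have [da db] := dab x hx.
  have H := is_deriveB (is_deriveM (@is_derive_cosw R w x) db) (is_deriveM (@is_derive_sinw R w x) da).
  apply: is_derive_eq H _; rewrite /c /s /GRing.scale /=; ring.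
have hp := @const_deriv0 p T (wcontD (wcontM cc ca) (wcontM cs cb)) dp t tT.
have hq := @const_deriv0 q T (wcontB (wcontM cc cb) (wcontM cs ca)) dq t tT.
have hp' : cos (w*t) * a t + sin (w*t) * b t = cos (w*0) * a 0 + sin (w*0) * b 0 := hp.
have hq' : cos (w*t) * b t - sin (w*t) * a t = cos (w*0) * b 0 - sin (w*0) * a 0 := hq.
move: hp' hq'; rewrite mulr0 cos0 sin0 !mul1r !mul0r addr0 subr0 => <- <-.
have e := cos2Dsin2 (w * t).
split.
  by rewrite -{1}[a t]mul1r -e; ring.
by rewrite -{1}[b t]mul1r -e; ring.
Qed.

End Sc2.
Section Mx.
Variable R : realType.

Lemma cvg_entry (T : Type) (F : set_system T) {FF : Filter F} p q
  (f : T -> 'M[R]_(p, q)) (L : 'M[R]_(p, q)) i j :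
  f @ F --> L -> (fun x => f x i j) @ F --> L i j.
Proof.
move=> /cvgrPdist_le H; apply/cvgrPdist_le => e e0.
apply: filterS (H e e0) => x; apply: le_trans.
rewrite [leRHS]/Num.Def.normr/= mx_normrE.
apply: le_trans; last exact: le_bigmax.
by rewrite !mxE.
Qed.

Lemma cvg_entries (T : Type) (F : set_system T) {FF : Filter F} p q
  (f : T -> 'M[R]_(p, q)) (L : 'M[R]_(p, q)) :
  (forall i j, (fun x => f x i j) @ F --> L i j) -> f @ F --> L.
Proof.
move=> H; apply/cvgrPdist_le => e e0.
near=> x.
rewrite /Num.Def.normr/= mx_normrE (bigmax_le _ (ltW e0))//= => i _.
rewrite !mxE/=.
move: i; near: x; apply: filter_forall => /= i.
exact: ((cvgrPdist_le _ _).1 (H i.1 i.2)).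
Unshelve. all: by end_near. Qed.

Lemma near0_in (T t : R) : -T < t < T -> \forall h \near (0:R), -T <= t + h <= T.
Proof.
move=> /andP[h1 h2].
have e0 : 0 < Num.min (T - t) (t + T) by rewrite lt_min; apply/andP; split; lra.
near=> h.
have : `|h| < Num.min (T - t) (t + T) by near: h; exact: (@nbhs0_lt R R^o _ e0).
rewrite lt_min !ltr_norml => /andP[/andP[? ?] /andP[? ?]]; apply/andP; split; lra.
Unshelve. all: by end_near. Qed.

Lemma within_dnbhs (S : set R) (g : R -> R) (l : R) :
  (\forall h \near (0:R), S h) -> g @ within S (0:R)^' --> l -> g @ (0:R)^' --> l.
Proof.
move=> S0 H P /H HW.
have S1 : (0:R)^' S by exact: nbhs_dnbhs S0.
change ((0:R)^' (fun x => S x -> P (g x))) in HW.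
change ((0:R)^' (fun x => P (g x))).
exact: (@filterS2 _ _ (dnbhs_filter (0:R)) _ _ _ (fun x Sx HP => HP Sx) S1 HW).
Qed.

Lemma is_derive_of_cvg (f : R -> R) t d :
  (fun h => h^-1 * (f (t + h) - f t)) @ (0:R)^' --> d -> is_derive t 1 f d.
Proof.
move=> H.
have E : (fun h : R => h^-1 *: ((f \o shift t) (h *: 1) - f t)) =
         (fun h => h^-1 * (f (t + h) - f t)).
  apply/funext => h /=; rewrite (_ : h%:A = h); first by rewrite [h + t]addrC.
  by rewrite /GRing.scale /= mulr1.
apply: DeriveDef; rewrite /derivable /derive E.
  exact: cvgP H.
exact: cvg_lim H.
Qed.

Lemma cvg_of_is_derive (f : R -> R) (t d : R) (S : set R) :
  is_derive t 1 f d -> (fun h => h^-1 * (f (t + h) - f t)) @ within S (0:R)^' --> d.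
Proof.
case=> H1 H2.
have E : (fun h : R => h^-1 *: ((f \o shift t) (h *: 1) - f t)) =
         (fun h => h^-1 * (f (t + h) - f t)).
  apply/funext => h /=; rewrite (_ : h%:A = h); first by rewrite [h + t]addrC.
  by rewrite /GRing.scale /= mulr1.
apply: cvg_within_filter.
move: H1 H2; rewrite /derivable /derive E => H1 <-; exact: H1.
Qed.
End Mx.
Section Vec.
Variable R : realType.

Lemma cexp_it (t w : R) : cexp (toC t * Complex 0 w) = Complex (cos (w * t)) (sin (w * t)).
Proof.
rewrite /cexp /toC /=.
by rewrite !mulr0 !mul0r subr0 addr0 expR0 !mul1r [t * w]mulrC.
Qed.

Lemma ode_vec k (u u' : R -> 'cV[R[i]]_k) (T w : R) :
  cont_on (-T) T u -> deriv_on (-T) T u u' ->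
  (forall t, -T <= t <= T -> u' t = Complex 0 w *: u t) ->
  forall t, -T <= t <= T -> u t = cexp (toC t * Complex 0 w) *: u 0.
Proof.
move=> [cre cim] du hu' t tT.
apply/matrixP => i j; rewrite mxE cexp_it.
pose a x := complex.Re (u x i j); pose b x := complex.Im (u x i j).
have Ea : (fun y => cvRe (u y) i j) = a by apply/funext => y; rewrite mxE.
have Eb : (fun y => cvIm (u y) i j) = b by apply/funext => y; rewrite mxE.
have ca : {within `[-T, T], continuous a}.
  move=> x; have := @cvg_entry R _ _ _ _ _ _ _ i j (cre x).
  by rewrite Ea /a mxE => H; apply: H; apply: nbhs_filter.
have cb : {within `[-T, T], continuous b}.
  move=> x; have := @cvg_entry R _ _ _ _ _ _ _ i j (cim x).
  by rewrite Eb /b mxE => H; apply: H; apply: nbhs_filter.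
have dab : forall x, -T < x < T ->
    is_derive x 1 a (- (w * b x)) /\ is_derive x 1 b (w * a x).
  move=> x xT.
  have xT' : -T <= x <= T by case/andP: xT => h1 h2; apply/andP; split; lra.
  have [d1 d2] := du x xT'.
  split; apply: is_derive_of_cvg; apply: (@within_dnbhs R _ _ _ (@near0_in R T x xT)).
  - have := @cvg_entry R _ _ _ _ _ _ _ i j d1.
    rewrite (_ : (fun h => _) = fun h => h^-1 * (a (x + h) - a x)); last first.
      by apply/funext => h; rewrite !mxE.
    rewrite mxE hu' // mxE /a /b.
    by case: (u x i j) => p0 q0 /= H; rewrite mul0r sub0r in H; apply: H; apply: within_filter.
  - have := @cvg_entry R _ _ _ _ _ _ _ i j d2.
    rewrite (_ : (fun h => _) = fun h => h^-1 * (b (x + h) - b x)); last first.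
      by apply/funext => h; rewrite !mxE.
    rewrite mxE hu' // mxE /a /b.
    by case: (u x i j) => p0 q0 /= H; rewrite mul0r add0r in H; apply: H; apply: within_filter.
have [ha hb] := @ode_unique R w a b T ca cb dab t tT.
move: ha hb; rewrite /a /b.
case: (u t i j) => p1 q1; case: (u 0 i j) => p0 q0 /= -> ->.
apply/eqP; rewrite eq_complex /=; apply/andP; split; apply/eqP; ring.
Qed.
End Vec.
Section Sol.
Variable R : realType.
Variable w : R.

Lemma is_derive_cs (p q t : R) :
  is_derive t 1 (fun x => cos (w * x) * p - sin (w * x) * q)
    (- (w * sin (w * t)) * p - w * cos (w * t) * q).
Proof.
have H := is_deriveB (is_deriveM (@is_derive_cosw R w t) (is_derive_cst p t 1))
                     (is_deriveM (@is_derive_sinw R w t) (is_derive_cst q t 1)).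
apply: is_derive_eq H _; rewrite /GRing.scale /=; ring.
Qed.

Lemma cont_cs (p q : R) : continuous (fun x => cos (w * x) * p - sin (w * x) * q).
Proof.
move=> x; apply/differentiable_continuous/derivable1_diffP.
by case: (is_derive_cs p q x).
Qed.

Lemma sol_entries {k : nat} (v : 'cV[R[i]]_k) (t : R) i j :
  cvRe (cexp (toC t * Complex 0 w) *: v) i j =
    cos (w * t) * complex.Re (v i j) - sin (w * t) * complex.Im (v i j) /\
  cvIm (cexp (toC t * Complex 0 w) *: v) i j =
    cos (w * t) * complex.Im (v i j) - sin (w * t) * (- complex.Re (v i j)).
Proof.
rewrite !mxE cexp_it; case: (v i j) => p q /=; split; ring.
Qed.

Lemma sol_dentries {k : nat} (v : 'cV[R[i]]_k) (t : R) i j :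
  cvRe (Complex 0 w *: (cexp (toC t * Complex 0 w) *: v)) i j =
    - (w * sin (w * t)) * complex.Re (v i j) - w * cos (w * t) * complex.Im (v i j) /\
  cvIm (Complex 0 w *: (cexp (toC t * Complex 0 w) *: v)) i j =
    - (w * sin (w * t)) * complex.Im (v i j) - w * cos (w * t) * (- complex.Re (v i j)).
Proof.
rewrite !mxE cexp_it; case: (v i j) => p q /=; split; ring.
Qed.

Lemma exp_sol k (v : 'cV[R[i]]_k) (a b : R) :
  cont_on a b (fun t => cexp (toC t * Complex 0 w) *: v) /\
  deriv_on a b (fun t => cexp (toC t * Complex 0 w) *: v)
              (fun t => Complex 0 w *: (cexp (toC t * Complex 0 w) *: v)).
Proof.
split.
  split; apply: continuous_subspaceT => x; apply: cvg_entries => i j.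
  - rewrite (_ : (fun y => _) = fun y => cos (w * y) * complex.Re (v i j) - sin (w * y) * complex.Im (v i j)).
      by rewrite (sol_entries v x i j).1; apply: cont_cs.
    by apply/funext => y; rewrite (sol_entries v y i j).1.
  - rewrite (_ : (fun y => _) = fun y => cos (w * y) * complex.Im (v i j) - sin (w * y) * (- complex.Re (v i j))).
      by rewrite (sol_entries v x i j).2; apply: cont_cs.
    by apply/funext => y; rewrite (sol_entries v y i j).2.
move=> t _; split; apply: cvg_entries => i j.
- rewrite (sol_dentries v t i j).1.
  set g := fun y => cos (w * y) * complex.Re (v i j) - sin (w * y) * complex.Im (v i j).
  rewrite (_ : (fun h => _) = fun h => h^-1 * (g (t + h) - g t)).
    exact: cvg_of_is_derive (is_derive_cs _ _ t).
  by apply/funext => h; rewrite /g -(sol_entries v (t + h) i j).1 -(sol_entries v t i j).1 !mxE.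
- rewrite (sol_dentries v t i j).2.
  set g := fun y => cos (w * y) * complex.Im (v i j) - sin (w * y) * (- complex.Re (v i j)).
  rewrite (_ : (fun h => _) = fun h => h^-1 * (g (t + h) - g t)).
    exact: cvg_of_is_derive (is_derive_cs _ _ t).
  by apply/funext => h; rewrite /g -(sol_entries v (t + h) i j).2 -(sol_entries v t i j).2 !mxE.
Qed.
End Sol.

Section Core.
Variables (F : fieldType) (n nu ny : nat).
Variables (K Kh : 'M[F]_n) (B : 'M[F]_(n, nu)) (Bt : 'M[F]_(nu, n))
  (C : 'M[F]_(ny, n)) (Ct : 'M[F]_(n, ny)) (D : 'M[F]_(ny, nu)) (Dt : 'M[F]_(nu, ny)) (c : F).
Let Dx := Dt *m D - c%:M.
Let tD := D *m Dt - c%:M.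
Hypotheses (HK : K \in unitmx) (HKh : Kh \in unitmx) (HDx : Dx \in unitmx) (HtD : tD \in unitmx).
Let G := C *m invmx K *m B + D.
Let Gh := Bt *m invmx Kh *m Ct + Dt.
Let Q1 (x y : 'cV[F]_n) := K *m x + B *m (invmx Dx *m (Dt *m (C *m x) + Bt *m y)).
Let Q2 (x y : 'cV[F]_n) := c *: (Ct *m (invmx tD *m (C *m x))) + Kh *m y + Ct *m (D *m (invmx Dx *m (Bt *m y))).

Lemma DDx : D *m invmx Dx = invmx tD *m D.
Proof.
have e : tD *m D = D *m Dx.
  by rewrite /tD /Dx mulmxBl mulmxBr mul_scalar_mx mul_mx_scalar !mulmxA.
by rewrite -{1}(mulKmx HtD D) e mulmxA mulmxK.
Qed.

Lemma DDxDt (v : 'cV[F]_ny) : D *m (invmx Dx *m (Dt *m v)) = v + c *: (invmx tD *m v).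
Proof.
rewrite !mulmxA DDx -(mulmxA (invmx tD) D Dt).
have -> : D *m Dt = tD + c%:M by rewrite /tD subrK.
by rewrite mulmxDr mulVmx // mul_mx_scalar mulmxDl mul1mx scalemxAl.
Qed.

Lemma e_lemma {x y : 'cV[F]_n} {z : 'cV[F]_nu} :
  Bt *m y = - (Dx *m z) - Dt *m (C *m x) -> G *m z = C *m x + D *m z ->
  Ct *m (D *m (invmx Dx *m (Bt *m y))) =
    - (Ct *m (G *m z)) - c *: (Ct *m (invmx tD *m (C *m x))).
Proof.
move=> hBy hGz.
rewrite hBy mulmxBr mulmxN mulKmx // mulmxBr mulmxN DDxDt hGz.
rewrite !mulmxDr !mulmxN mulmxDr scalemxAr !opprD.
by rewrite !scalemxAr addrA (addrC (- (Ct *m (D *m z)))).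
Qed.

Lemma core_fwd (x y : 'cV[F]_n) : col_mx x y != 0 -> Q1 x y = 0 -> Q2 x y = 0 ->
  exists z : 'cV[F]_nu, z != 0 /\ Gh *m (G *m z) = c *: z.
Proof.
move=> nz h1 h2.
set z := - (invmx Dx *m (Dt *m (C *m x) + Bt *m y)).
have hDz : Dx *m z = - (Dt *m (C *m x) + Bt *m y) by rewrite /z mulmxN mulKVmx.
have hz : invmx Dx *m (Dt *m (C *m x) + Bt *m y) = - z by rewrite /z opprK.
clearbody z.
have hx : x = invmx K *m (B *m z).
  apply: (canRL (mulKmx HK)); move/eqP: h1; rewrite /Q1 addr_eq0 => /eqP ->.
  by rewrite hz mulmxN opprK.
have hBy : Bt *m y = - (Dx *m z) - Dt *m (C *m x) by rewrite hDz opprK (addrC (Dt *m _)) addrK.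
have hGz : G *m z = C *m x + D *m z by rewrite /G mulmxDl hx !mulmxA.
have e := e_lemma hBy hGz.
have hKy : Kh *m y = Ct *m (G *m z).
  apply/eqP; rewrite -subr_eq0 -h2 /Q2 e.
  by rewrite [c *: _ + _]addrC -addrA (addrCA (c *: _)) subrr addr0.
have hy : y = invmx Kh *m (Ct *m (G *m z)) by rewrite -hKy mulKmx.
exists z; split.
  apply: contraNneq nz => z0.
  by rewrite hy hx z0 !mulmx0 col_mx0.
have : Bt *m y = c *: z - Dt *m (G *m z).
  by rewrite hBy hGz /Dx mulmxBl mul_scalar_mx mulmxDr opprB -mulmxA opprD addrA addrAC.
by move=> h; rewrite /Gh mulmxDl -!mulmxA -hy h subrK.
Qed.

Lemma core_bwd (z : 'cV[F]_nu) : z != 0 -> Gh *m (G *m z) = c *: z ->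
  exists x y : 'cV[F]_n, [/\ col_mx x y != 0, Q1 x y = 0 & Q2 x y = 0].
Proof.
move=> nz h.
pose x := invmx K *m (B *m z).
pose y := invmx Kh *m (Ct *m (G *m z)).
have hGz : G *m z = C *m x + D *m z by rewrite /G mulmxDl /x !mulmxA.
have h' : Bt *m y + Dt *m (G *m z) = c *: z by rewrite -h /Gh mulmxDl /y !mulmxA.
have hBy0 : Bt *m y = c *: z - Dt *m (G *m z) by rewrite -h' addrK.
have hCx : C *m x = G *m z - D *m z by rewrite hGz addrK.
have hz : Dt *m (C *m x) + Bt *m y = - (Dx *m z).
  rewrite hCx hBy0 /Dx mulmxBr mulmxBl mul_scalar_mx mulmxA opprB.
  by rewrite !mulmxA addrCA addrAC subrr add0r.
have hBy : Bt *m y = - (Dx *m z) - Dt *m (C *m x) by rewrite -hz addrC addKr.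
have hinv : invmx Dx *m (Dt *m (C *m x) + Bt *m y) = - z by rewrite hz mulmxN mulKmx.
exists x, y; split.
- apply: contraNneq nz; move/eqP; rewrite col_mx_eq0 => /andP[/eqP x0 /eqP y0].
  move: hz; rewrite x0 y0 !mulmx0 addr0 => /eqP; rewrite eq_sym oppr_eq0 => /eqP dz.
  by rewrite -(mulKmx HDx z) dz mulmx0.
- by rewrite /Q1 hinv /x mulKVmx // mulmxN subrr.
- rewrite /Q2 (e_lemma hBy hGz) /y mulKVmx //.
  by rewrite [c *: _ + _]addrC -addrA (addrCA (c *: _)) subrr addr0 subrr.
Qed.
End Core.

Section Ctr.
Variable R : realType.
Local Notation C := R[i].

Lemma mxCE p q (M : 'M[R]_(p, q)) : mxC M = map_mx (real_complex R) M.
Proof. by []. Qed.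

Lemma ctrmxK p q (M : 'M[C]_(p, q)) : ctrmx (ctrmx M) = M.
Proof. by apply/matrixP => i j; rewrite !mxE conjcK. Qed.

Lemma ctrmxM p q r (M : 'M[C]_(p, q)) (N : 'M[C]_(q, r)) :
  ctrmx (M *m N) = ctrmx N *m ctrmx M.
Proof. by rewrite /ctrmx map_mxM trmx_mul. Qed.

Lemma ctrmxD p q (M N : 'M[C]_(p, q)) : ctrmx (M + N) = ctrmx M + ctrmx N.
Proof. by rewrite /ctrmx map_mxD linearD. Qed.

Lemma ctrmxB p q (M N : 'M[C]_(p, q)) : ctrmx (M - N) = ctrmx M - ctrmx N.
Proof. by rewrite /ctrmx map_mxB linearB. Qed.

Lemma ctrmxZ p q a (M : 'M[C]_(p, q)) : ctrmx (a *: M) = conjc a *: ctrmx M.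
Proof. by rewrite /ctrmx map_mxZ linearZ. Qed.

Lemma ctrmx_sum p q (I : finType) (F : I -> 'M[C]_(p, q)) :
  ctrmx (\sum_i F i) = \sum_i ctrmx (F i).
Proof. by rewrite /ctrmx raddf_sum linear_sum. Qed.

Lemma ctrmx_scalar p (a : C) : ctrmx (a%:M : 'M[C]_p) = (conjc a)%:M.
Proof. by rewrite /ctrmx map_scalar_mx tr_scalar_mx. Qed.

Lemma ctrmx_inv p (M : 'M[C]_p) : ctrmx (invmx M) = invmx (ctrmx M).
Proof. by rewrite /ctrmx map_invmx trmx_inv. Qed.

Lemma ctrmx_unit p (M : 'M[C]_p) : (ctrmx M \in unitmx) = (M \in unitmx).
Proof. by rewrite /ctrmx unitmx_tr map_unitmx. Qed.

Lemma ctrmx_mxC p q (M : 'M[R]_(p, q)) : ctrmx (mxC M) = mxC M^T.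
Proof. by apply/matrixP => i j; rewrite !mxE /toC /= oppr0. Qed.

Lemma conj_toC (r : R) : conjc (toC r) = toC r.
Proof. by apply/eqP; rewrite eq_complex /= oppr0 !eqxx. Qed.

Lemma toCN (r : R) : toC (- r) = - toC r.
Proof. by apply/eqP; rewrite eq_complex /= oppr0 !eqxx. Qed.

Lemma conj_cexp (z : C) : conjc (cexp z) = cexp (conjc z).
Proof. by case: z => a b; rewrite /cexp /= cosN sinN mulrN. Qed.

End Ctr.
Lemma sum_col_mx (F : zmodType) (I : finType) p1 p2 q (f : I -> 'M[F]_(p1, q)) (g : I -> 'M[F]_(p2, q)) :
  \sum_i col_mx (f i) (g i) = col_mx (\sum_i f i) (\sum_i g i).
Proof.
apply: (big_rec3 (fun a b c => a = col_mx b c)); first by rewrite col_mx0.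
by move=> i a b c _ ->; rewrite add_col_mx.
Qed.

Section Glue.
Variables (R : realType) (n m nu ny : nat) (A0 : 'M[R]_n) (A : 'I_m -> 'M[R]_n)
  (B : 'M[R]_(n, nu)) (C : 'M[R]_(ny, n)) (D : 'M[R]_(ny, nu)) (tau : 'I_m -> R)
  (xi omega : R).
Local Notation lam := (Complex 0 omega).
Local Notation Bc := (mxC B).
Local Notation Btc := (mxC B^T).
Local Notation Cc := (mxC C).
Local Notation Ctc := (mxC C^T).
Local Notation Dc := (mxC D).
Local Notation Dtc := (mxC D^T).
Local Notation c := (toC (xi ^+ 2)).
Local Notation K := (charmx A0 A tau lam).
Local Notation Kh := (ctrmx (charmx A0 A tau lam)).

Lemma mxC_Dxi : mxC (Dxi D xi) = Dtc *m Dc - c%:M.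
Proof. by rewrite /Dxi !mxCE map_mxB map_mxM map_scalar_mx. Qed.

Lemma mxC_tDxi : mxC (tDxi D xi) = Dc *m Dtc - c%:M.
Proof. by rewrite /tDxi !mxCE map_mxB map_mxM map_scalar_mx. Qed.

Lemma conj_lam : conjc lam = - lam.
Proof. by apply/eqP; rewrite eq_complex /= oppr0 !eqxx. Qed.

Lemma Kh_eq : Kh = - lam%:M - mxC A0^T - \sum_i cexp (toC (tau i) * lam) *: mxC (A i)^T.
Proof.
rewrite /charmx !ctrmxB ctrmx_scalar ctrmx_mxC ctrmx_sum conj_lam.
congr (_ - _ - _); first by rewrite raddfN.
apply: eq_bigr => i _.
rewrite ctrmxZ ctrmx_mxC conj_cexp rmorphM rmorphN.
by congr (cexp _ *: _); apply/eqP; rewrite eq_complex /=; apply/andP; split; apply/eqP; ring.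
Qed.

Lemma G_ctr : ctrmx (transfer A0 A tau B C D lam) = Btc *m invmx Kh *m Ctc + Dtc.
Proof. by rewrite /transfer ctrmxD !ctrmxM ctrmx_inv !ctrmx_mxC mulmxA. Qed.

Local Notation Dxc := (Dtc *m Dc - c%:M).
Local Notation tDc := (Dc *m Dtc - c%:M).

Lemma map_rcZ p q (a : R) (M : 'M[R]_(p, q)) :
  map_mx (real_complex R) (a *: M) = toC a *: map_mx (real_complex R) M.
Proof. by apply/matrixP => i j; rewrite !mxE /toC /= rmorphM. Qed.

Lemma Hv_col (x y : 'cV[R[i]]_n) :
  mxC (Mzero A0 B C D xi) *m col_mx x y +
  \sum_(i < m) (mxC (Mplus (A i)) *m (cexp (toC (- tau i) * lam) *: col_mx x y) +
                mxC (Mminus (A i)) *m (cexp (toC (tau i) * lam) *: col_mx x y))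
  = col_mx (lam *: x - (K *m x + Bc *m (invmx Dxc *m (Dtc *m (Cc *m x) + Btc *m y))))
           (lam *: y + (c *: (Ctc *m (invmx tDc *m (Cc *m x))) + Kh *m y +
                        Ctc *m (Dc *m (invmx Dxc *m (Btc *m y))))).
Proof.
have E1 : forall i, mxC (Mplus (A i)) *m (cexp (toC (- tau i) * lam) *: col_mx x y) +
                mxC (Mminus (A i)) *m (cexp (toC (tau i) * lam) *: col_mx x y) =
   col_mx (cexp (- toC (tau i) * lam) *: (mxC (A i) *m x))
          (- (cexp (toC (tau i) * lam) *: (mxC (A i)^T *m y))).
  move=> i; rewrite /Mplus /Mminus !mxCE !map_block_mx !raddf0 !scale_col_mx !mul_block_col.
  rewrite !mul0mx !addr0 !add0r add_col_mx addr0 add0r toCN !scalemxAr.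
  by rewrite map_mxN mulNmx.
rewrite (eq_bigr _ (fun i _ => E1 i)) sum_col_mx.
have hDi : mxC (invmx (Dxi D xi)) = invmx Dxc by rewrite mxCE map_invmx -mxCE mxC_Dxi.
have htDi : mxC (invmx (tDxi D xi)) = invmx tDc by rewrite mxCE map_invmx -mxCE mxC_tDxi.
rewrite /Mzero.
move: (invmx (Dxi D xi)) hDi => Di hDi.
move: (invmx (tDxi D xi)) htDi => tDi htDi.
rewrite !mxCE map_block_mx mul_block_col add_col_mx.
rewrite !(map_mxB, map_mxD, map_mxN, map_mxM, map_rcZ) -!mxCE hDi htDi.
congr col_mx.
- rewrite /charmx !mulmxBl ?mulmxDl mul_scalar_mx mulmx_suml !mulmxDr !mulmxA ?mulNmx.
  under eq_bigr do rewrite scalemxAl.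
  apply/matrixP => i j; rewrite !mxE.
  ring.
- rewrite Kh_eq !mulmxBl !mulmxDl !mulNmx mul_scalar_mx mulmx_suml !mulmxA ?mulNmx.
  rewrite -!scalemxAl sumrN.
  under eq_bigr do rewrite scalemxAl.
  apply/matrixP => i j; rewrite !mxE.
  ring.
Qed.
End Glue.

Lemma tD_unit (F : fieldType) p q (D : 'M[F]_(p, q)) (Dt : 'M[F]_(q, p)) (c : F) :
  c != 0 -> (Dt *m D - c%:M) \in unitmx -> (D *m Dt - c%:M) \in unitmx.
Proof.
move=> c0 hu; rewrite -row_free_unit; apply: inj_row_free => u.
rewrite mulmxBr mul_mx_scalar => /eqP; rewrite subr_eq0 => /eqP huD.
have h1 : (u *m D) *m (Dt *m D - c%:M) = 0.
  by rewrite mulmxBr mul_mx_scalar mulmxA -(mulmxA u D Dt) huD -scalemxAl subrr.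
have h2 : u *m D = 0 by rewrite -(mulmxK hu (u *m D)) h1 mul0mx.
have h3 : c *: u = 0 by rewrite -huD mulmxA h2 mul0mx.
by rewrite -[u]scale1r -(mulVf c0) -scalerA h3 scaler0.
Qed.

Section SV.
Variable R : realType.
Lemma sv_iff p q (G : 'M[R[i]]_(p, q)) (xi : R) : 0 <= xi ->
  has_singular_value G xi <->
  exists z : 'cV[R[i]]_q, z != 0 /\ ctrmx G *m (G *m z) = toC (xi ^+ 2) *: z.
Proof.
move=> xi0; rewrite /has_singular_value.
have herm : ctrmx (ctrmx G *m G) = ctrmx G *m G by rewrite ctrmxM ctrmxK.
have c0 : forall a b, ctrmx (0 : 'M[R[i]]_(a, b)) = 0.
  by move=> a b; apply/matrixP => i j; rewrite !mxE conjc0.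
split.
- case=> _ /eigenvalueP [v hv nz]; exists (ctrmx v); split.
    by apply: contraNneq nz => h; rewrite -(@ctrmxK R _ _ v) h c0.
  by rewrite mulmxA -herm -ctrmxM hv ctrmxZ conj_toC.
- case=> z [nz hz]; split => //; apply/eigenvalueP; exists (ctrmx z).
    by rewrite -{1}herm -ctrmxM -mulmxA hz ctrmxZ conj_toC.
  by apply: contraNneq nz => h; rewrite -(@ctrmxK R _ _ z) h c0.
Qed.
End SV.

Lemma cexp0 (R : realType) (w : R) : cexp (toC 0 * Complex 0 w) = 1.
Proof. by rewrite cexp_it mulr0 cos0 sin0. Qed.

Local Close Scope classical_set_scope.
Theorem theorem1 (R : realType) (n m nu ny : nat)
  (A0 : 'M[R]_n) (A : 'I_m -> 'M[R]_n) (B : 'M[R]_(n, nu))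
  (C : 'M[R]_(ny, n)) (D : 'M[R]_(ny, nu)) (tau : 'I_m -> R) :
  (0 < n)%N -> (0 < m)%N -> (0 < nu)%N -> (0 < ny)%N ->
  (forall i, 0 <= tau i) ->
  (* stability: every characteristic root has negative real part *)
  (forall s : R[i], \det (charmx A0 A tau s) = 0 -> complex.Re s < 0) ->
  forall xi : R, 0 < xi -> Dxi D xi \in unitmx ->
  forall omega : R, 0 <= omega ->
    has_singular_value (transfer A0 A tau B C D (Complex 0 omega)) xi <->
    eigenvalue_L A0 A tau B C D xi (Complex 0 omega).
Proof.
move=> n0 m0 nu0 ny0 tau0 stab xi xi0 HDxi omega om0.
have tauT : forall i, tau i <= tau_max tau by move=> i; exact: le_bigmax.
have T0 : 0 <= tau_max tau := le_trans (tau0 (Ordinal m0)) (tauT _).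
have HK : charmx A0 A tau (Complex 0 omega) \in unitmx.
  by rewrite unitmxE unitfE; apply/eqP => /stab; rewrite /= ltxx.
have HKh : ctrmx (charmx A0 A tau (Complex 0 omega)) \in unitmx by rewrite ctrmx_unit.
have HDx : mxC D^T *m mxC D - (toC (xi ^+ 2))%:M \in unitmx.
  by rewrite -mxC_Dxi mxCE map_unitmx.
have HtD : mxC D *m mxC D^T - (toC (xi ^+ 2))%:M \in unitmx.
  rewrite -mxC_tDxi mxCE map_unitmx; apply: tD_unit HDxi.
  by rewrite expf_neq0 // gt_eqF.
rewrite (@sv_iff R _ _ _ _ (ltW xi0)) G_ctr /transfer /eigenvalue_L /in_dom_L; cbv zeta.
split.
- case=> z [nz hz].
  have [x [y [nzxy h1 h2]]] := @core_bwd R[i] n nu ny _ _ (mxC B) (mxC B^T) (mxC C) (mxC C^T) (mxC D) (mxC D^T) (toC (xi ^+ 2)) HK HKh HDx HtD z nz hz.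
  have [cu du] := @exp_sol R omega _ (col_mx x y) (- tau_max tau) (tau_max tau).
  exists (fun t => cexp (toC t * Complex 0 omega) *: col_mx x y).
  exists (fun t => Complex 0 omega *: (cexp (toC t * Complex 0 omega) *: col_mx x y)).
  split.
  + split.
    * exact: cu.
    * exact: du.
    * rewrite (_ : (fun t => _) = fun t => cexp (toC t * Complex 0 omega) *:
                   (Complex 0 omega *: col_mx x y)).
        exact: (@exp_sol R omega _ _ (- tau_max tau) (tau_max tau)).1.
      by apply/funext => t; rewrite !scalerA mulrC.
    * rewrite !cexp0 !scale1r Hv_col.
      move: h1 h2 => /= -> ->.
      by rewrite subr0 addr0 scale_col_mx.
  + exists 0; split; first by rewrite oppr_le0 T0.
    by rewrite cexp0 scale1r.
  + by move=> t _.
- case=> u [u' [[cu du cu' bc] [t0 [t0T ut0]] hu']].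
  have hode := @ode_vec R _ u u' (tau_max tau) omega cu du hu'.
  have T0' : - tau_max tau <= 0 <= tau_max tau by rewrite oppr_le0 T0.
  have nz : u 0 != 0.
    by apply: contraNneq ut0 => h; rewrite hode // h scaler0.
  have hin1 : forall i, - tau_max tau <= - tau i <= tau_max tau.
    move=> i; have := tauT i; have := tau0 i; move=> h1 h2; apply/andP; split; lra.
  have hin2 : forall i, - tau_max tau <= tau i <= tau_max tau.
    move=> i; have := tauT i; have := tau0 i; move=> h1 h2; apply/andP; split; lra.
  have e := bc.
  rewrite (hu' 0 T0') (eq_bigr (fun i => mxC (Mplus (A i)) *m (cexp (toC (- tau i) * Complex 0 omega) *: u 0) +
      mxC (Mminus (A i)) *m (cexp (toC (tau i) * Complex 0 omega) *: u 0))) in e; last first.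
    by move=> i _; rewrite -(hode _ (hin1 i)) -(hode _ (hin2 i)).
  move: e nz; rewrite -(vsubmxK (u 0)) Hv_col scale_col_mx.
  move: (usubmx (u 0)) (dsubmx (u 0)) => x y /eq_col_mx [e1 e2] nz.
  have h1 : charmx A0 A tau (Complex 0 omega) *m x +
      mxC B *m (invmx (mxC D^T *m mxC D - (toC (xi ^+ 2))%:M) *m
        (mxC D^T *m (mxC C *m x) + mxC B^T *m y)) = 0.
    have := congr1 (fun w => Complex 0 omega *: x - w) e1.
    by rewrite subrr => /esym; rewrite opprB addrCA subrr addr0.
  have h2 : toC (xi ^+ 2) *: (mxC C^T *m (invmx (mxC D *m mxC D^T - (toC (xi ^+ 2))%:M) *m (mxC C *m x))) +
      ctrmx (charmx A0 A tau (Complex 0 omega)) *m y +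
      mxC C^T *m (mxC D *m (invmx (mxC D^T *m mxC D - (toC (xi ^+ 2))%:M) *m (mxC B^T *m y))) = 0.
    have := congr1 (fun w => w - Complex 0 omega *: y) e2.
    by rewrite subrr addrC addKr => /esym.
  exact: (@core_fwd R[i] n nu ny _ _ (mxC B) (mxC B^T) (mxC C) (mxC C^T) (mxC D) (mxC D^T) (toC (xi ^+ 2)) HK HKh HDx HtD x y nz h1 h2).
Qed.
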